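(* Let $D$ be a quiver with $V(D)\neq\emptyset$, and let $L(D)$ be its loading. Define $j_{D,V} : V(D)\to V(L(D))$ by $j_{D,V}(v)=v$ and $j_{D,E} : E(D)\to E(L(D))$ by $j_{D,E}(e)=(0,e)$. Then $j_D := (j_{D,V},j_{D,E})$ is a mono-essential quiver homomorphism, and $L(D)$ equipped with $j_D$ is a mono-injective envelope of $D$ in $\mathbf{Quiv}$.
   Context: A quiver is a quadruple $(V,E,\sigma,\tau)$ with $V,E$ sets and $\sigma,\tau : E \to V$ functions (source and target). A quiver homomorphism is a pair of functions on vertices and edges commuting with sources and targets; $\mathbf{Quiv}$ is the category of quivers and these homomorphisms. A homomorphism is monic iff its vertex and edge maps are both injective. For $v,w\in V(D)$, $\mathrm{edges}_D(v,w):=\sigma_D^{-1}(v)\cap\tau_D^{-1}(w)$. The loading $L(D)$ of $D$ has vertex set $V(D)$, edge set $\{(0,e): e\in E(D)\}\cup\{(1,v,w): v,w\in V(D),\ \mathrm{edges}_D(v,w)=\emptyset\}$, with source and target $\sigma(0,e)=\sigma_D(e)$, $\tau(0,e)=\tau_D(e)$, $\sigma(1,v,w)=v$, $\tau(1,v,w)=w$. A quiver $J$ is mono-injective if for every monic $\phi: A\to B$ and every $\psi: A\to J$ there exists $\hat\psi : B\to J$ with $\hat\psi\circ\phi=\psi$. A monic $\varphi : D\to C$ is mono-essential if for every quiver $A$ and homomorphism $\alpha: C\to A$, $\alpha\circ\varphi$ monic implies $\alpha$ monic. A mono-injective envelope of $D$ is a mono-injective quiver $C$ together with a mono-essential homomorphism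 $D\to C$. *)

(* Defs.v *)
Set Implicit Arguments.

Record quiver := Quiver {
  qV : Type;
  qE : Type;
  qsrc : qE -> qV;
  qtgt : qE -> qV }.

Record qhom (A B : quiver) := QHom {
  hV : qV A -> qV B;
  hE : qE A -> qE B;
  hsrc : forall e, qsrc B (hE e) = hV (qsrc A e);
  htgt : forall e, qtgt B (hE e) = hV (qtgt A e) }.

Definition qcomp (A B C : quiver) (g : qhom B C) (f : qhom A B) : qhom A C.
Proof.
  refine (@QHom A C (fun v => hV g (hV f v)) (fun e => hE g (hE f e)) _ _).
  - intro e. rewrite (hsrc g), (hsrc f). reflexivity.
  - intro e. rewrite (htgt g), (htgt f). reflexivity.
Defined.

Definition injective {X Y : Type} (f : X -> Y) := forall x y, f x = f y -> x = y.

Definition monic (A B : quiver) (f : qhom A B) : Prop :=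
  injective (hV f) /\ injective (hE f).

Definition qhom_eq (A B : quiver) (f g : qhom A B) : Prop :=
  (forall v, hV f v = hV g v) /\ (forall e, hE f e = hE g e).

Definition mono_injective (J : quiver) : Prop :=
  forall (A B : quiver) (phi : qhom A B) (psi : qhom A J),
    monic phi -> exists psihat : qhom B J, qhom_eq (qcomp psihat phi) psi.

Definition mono_essential (D C : quiver) (phi : qhom D C) : Prop :=
  monic phi /\
  forall (A : quiver) (alpha : qhom C A), monic (qcomp alpha phi) -> monic alpha.

Definition mono_injective_envelope (D C : quiver) (phi : qhom D C) : Prop :=
  mono_injective C /\ mono_essential phi.

Definition no_edges (D : quiver) (v w : qV D) : Prop :=
  ~ exists e : qE D, qsrc D e = v /\ qtgt D e = w.

(* Edge set of the loading: inl e  ~ (0,e);  inr (v,w) ~ (1,v,w). *)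
Definition loading_E (D : quiver) : Type :=
  (qE D + { p : qV D * qV D | no_edges D (fst p) (snd p) })%type.

Definition loading_src (D : quiver) (x : loading_E D) : qV D :=
  match x with inl e => qsrc D e | inr p => fst (proj1_sig p) end.
Definition loading_tgt (D : quiver) (x : loading_E D) : qV D :=
  match x with inl e => qtgt D e | inr p => snd (proj1_sig p) end.

Definition loading (D : quiver) : quiver :=
  @Quiver (qV D) (loading_E D) (@loading_src D) (@loading_tgt D).

Definition jD (D : quiver) : qhom D (loading D) :=
  @QHom D (loading D) (fun v => v) (fun e => inl e)
        (fun e => eq_refl) (fun e => eq_refl).

(* Main.v *)
Require Import Defs.
Unset Implicit Arguments.
From Stdlib Require Import ClassicalEpsilon ProofIrrelevance.

Definition hatV (A B J : quiver) (phi : qhom A B) (psi : qhom A J) (v0 : qV J)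
  (b : qV B) : qV J :=
  match excluded_middle_informative (exists a, hV phi a = b) with
  | left H => hV psi (proj1_sig (constructive_indefinite_description _ H))
  | right _ => v0
  end.

Lemma hatV_phi (A B J : quiver) (phi : qhom A B) (psi : qhom A J) v0 :
  injective (hV phi) -> forall a, @hatV A B J phi psi v0 (hV phi a) = hV psi a.
Proof.
  intros Hi a. unfold hatV.
  destruct (excluded_middle_informative _) as [H|H].
  - destruct (constructive_indefinite_description _ H) as [a' Ha']; simpl.
    rewrite (Hi _ _ Ha'). reflexivity.
  - exfalso; apply H; eauto.
Qed.

Definition hatE (A B D : quiver) (phi : qhom A B) (psi : qhom A (loading D)) (v0 : qV D)
  (f : qE B) : qE (loading D) :=
  match excluded_middle_informative (exists e, hE phi e = f) with
  | left H => hE psi (proj1_sig (constructive_indefinite_description _ H))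
  | right _ =>
    match excluded_middle_informative
      (exists e : qE D, qsrc D e = @hatV A B _ phi psi v0 (qsrc B f) /\
                        qtgt D e = @hatV A B _ phi psi v0 (qtgt B f)) with
    | left H2 => inl (proj1_sig (constructive_indefinite_description _ H2))
    | right H2 => inr (exist (fun p => no_edges D (fst p) (snd p))
                        (@hatV A B _ phi psi v0 (qsrc B f), @hatV A B _ phi psi v0 (qtgt B f)) H2)
    end
  end.

Lemma hatE_src (A B D : quiver) (phi : qhom A B) (psi : qhom A (loading D)) v0 :
  injective (hV phi) ->
  forall f, qsrc (loading D) (@hatE A B D phi psi v0 f) = @hatV A B _ phi psi v0 (qsrc B f).
Proof.
  intros Hi f. unfold hatE.
  destruct (excluded_middle_informative (exists e, hE phi e = f)) as [H|H].
  - destruct (constructive_indefinite_description _ H) as [e He]; simpl.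
    subst f. change (@loading_src D (hE psi e) = hatV A B (loading D) phi psi v0 (qsrc B (hE phi e))). rewrite (hsrc psi e : @loading_src D _ = _), (hsrc phi), hatV_phi by exact Hi. reflexivity.
  - destruct (excluded_middle_informative _) as [H2|H2].
    + destruct (constructive_indefinite_description _ H2) as [e [He1 He2]]; simpl.
      exact He1.
    + reflexivity.
Qed.

Lemma hatE_tgt (A B D : quiver) (phi : qhom A B) (psi : qhom A (loading D)) v0 :
  injective (hV phi) ->
  forall f, qtgt (loading D) (@hatE A B D phi psi v0 f) = @hatV A B _ phi psi v0 (qtgt B f).
Proof.
  intros Hi f. unfold hatE.
  destruct (excluded_middle_informative (exists e, hE phi e = f)) as [H|H].
  - destruct (constructive_indefinite_description _ H) as [e He]; simpl.
    subst f. change (@loading_tgt D (hE psi e) = hatV A B (loading D) phi psi v0 (qtgt B (hE phi e))). rewrite (htgt psi e : @loading_tgt D _ = _), (htgt phi), hatV_phi by exact Hi. reflexivity.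
  - destruct (excluded_middle_informative _) as [H2|H2].
    + destruct (constructive_indefinite_description _ H2) as [e [He1 He2]]; simpl.
      exact He2.
    + reflexivity.
Qed.

Lemma hatE_phi (A B D : quiver) (phi : qhom A B) (psi : qhom A (loading D)) v0 :
  injective (hE phi) -> forall e, @hatE A B D phi psi v0 (hE phi e) = hE psi e.
Proof.
  intros Hi e. unfold hatE.
  destruct (excluded_middle_informative _) as [H|H].
  - destruct (constructive_indefinite_description _ H) as [e' He']; simpl.
    rewrite (Hi _ _ He'). reflexivity.
  - exfalso; apply H; eauto.
Qed.

Lemma essential (D : quiver) : mono_essential (jD D).
Proof.
  split.
  - split; intros x y H; [exact H | injection H; auto].
  - intros A alpha [HV HE]. simpl in HV, HE.
    assert (HVa : injective (hV alpha)) by exact HV.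
    split; [exact HVa|].
    intros x y Hxy.
    assert (Hs : @loading_src D x = @loading_src D y).
    { apply HVa. pose proof (hsrc alpha x) as E1; pose proof (hsrc alpha y) as E2; simpl in E1, E2; rewrite <- E1, <- E2, Hxy; reflexivity. }
    assert (Ht : @loading_tgt D x = @loading_tgt D y).
    { apply HVa. pose proof (htgt alpha x) as E1; pose proof (htgt alpha y) as E2; simpl in E1, E2; rewrite <- E1, <- E2, Hxy; reflexivity. }
    destruct x as [e|[[v w] p]]; destruct y as [e'|[[v' w'] p']]; simpl in Hs, Ht.
    + f_equal. apply HE. exact Hxy.
    + exfalso. apply p'. simpl. exists e. auto.
    + exfalso. apply p. simpl. exists e'. auto.
    + subst v' w'. f_equal. f_equal. apply proof_irrelevance.
Qed.

Lemma injective_loading (D : quiver) (v0 : qV D) : mono_injective (loading D).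
Proof.
  intros A B phi psi [HV HE].
  exists (@QHom B (loading D) (@hatV A B _ phi psi v0) (@hatE A B D phi psi v0)
            (hatE_src A B D phi psi v0 HV) (hatE_tgt A B D phi psi v0 HV)).
  split; simpl; intros.
  - apply (hatV_phi A B (loading D)); exact HV.
  - apply hatE_phi; exact HE.
Qed.

Theorem mainTheorem5 (D : quiver) (hne : inhabited (qV D)) :
  mono_essential (jD D) /\ mono_injective_envelope (jD D).
Proof.
  destruct hne as [v0].
  split; [apply (essential D)|split; [apply (injective_loading D v0)|apply (essential D)]].
Qed.
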